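(* Let $G$ be a finite group. Then $G$ is an elementary abelian $2$-group if and only if the set of maximal sum-free sets in $G$ coincides with the set $\{G\setminus M : M \text{ a maximal subgroup of } G\}$ of complements of the maximal subgroups of $G$, and $\Phi(G)=1$, where $\Phi(G)$ is the Frattini subgroup of $G$ (the intersection of all maximal subgroups of $G$).
   Context: A non-empty subset $S$ of a group $G$ is called sum-free if for all $s_1,s_2\in S$ (including the case $s_1=s_2$) one has $s_1s_2\notin S$. A maximal sum-free set in a finite group $G$ means a sum-free set of largest possible cardinality among all sum-free sets in $G$ (maximal by cardinality). *)

(* Defs.v *)
From HB Require Import structures.
From mathcomp Require Import all_boot all_fingroup all_solvable.
Set Implicit Arguments. Unset Strict Implicit. Unset Printing Implicit Defensive.
Local Open Scope group_scope.

Definition sum_free (gT : finGroupType) (G S : {set gT}) : bool :=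
  [&& S != set0, S \subset G &
      [forall s1 in S, forall s2 in S, s1 * s2 \notin S]].

(* maximal sum-free set = sum-free set of largest cardinality *)
Definition max_sum_free (gT : finGroupType) (G S : {set gT}) : bool :=
  sum_free G S && [forall T : {set gT}, sum_free G T ==> (#|T| <= #|S|)].

(* Main.v *)
Require Import Defs.
From mathcomp Require Import all_boot all_fingroup all_solvable.
From mathcomp Require Import zify.
Local Open Scope group_scope.

Section Aux.
Variable gT : finGroupType.
Implicit Types (G : {group gT}) (S : {set gT}).

Lemma sum_freeP G S :
  reflect [/\ S != set0, S \subset G &
          forall a b, a \in S -> b \in S -> a * b \notin S] (sum_free G S).
Proof.
apply: (iffP and3P) => [[h1 h2 /forall_inP h3]|[h1 h2 h3]]; split => //.
  by move=> a b aS bS; move/forall_inP: (h3 a aS); apply.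
by apply/forall_inP => a aS; apply/forall_inP => b bS; apply: h3.
Qed.

Lemma sf_bound G S : sum_free G S -> (2 * #|S| <= #|G|)%N.
Proof.
case/sum_freeP => /set0Pn [s sS] sSG sf.
have cT : #|mulg s @: S| = #|S| by apply: card_imset; apply: mulgI.
have sT : mulg s @: S \subset G :\: S.
  apply/subsetP => y /imsetP [a aS ->]; rewrite inE sf //=.
  by rewrite groupM // (subsetP sSG).
have := subset_leq_card sT; rewrite cT cardsDS // => h.
have h2 := subset_leq_card sSG; by rewrite mul2n -addnn -leq_subRL.
Qed.

Lemma exp2_abelian G : (forall x, x \in G -> x ^+ 2 = 1) -> abelian G.
Proof.
move=> h; apply/centsP => x xG y yG.
have inv z : z \in G -> z^-1 = z.
  by move=> zG; apply/eqP; rewrite eq_invg_mul -expg2 h.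
rewrite /commute -(inv (x * y)) ?groupM // invMg inv // inv //.
Qed.

End Aux.

Theorem theorem2 (gT : finGroupType) (G : {group gT}) :
  2.-abelem G <->
  ((forall S : {set gT},
      max_sum_free G S <-> exists M : {group gT}, maximal M G /\ S = G :\: M)
   /\ 'Phi(G) = 1).
Proof.
split.
- move=> abG.
  have pG := abelem_pgroup abG.
  have [cGG ex2] : abelian G /\ (forall x, x \in G -> x ^+ 2 = 1) by apply/(abelemP (isT : prime 2)).
  have comm x y : x \in G -> y \in G -> commute x y.
    by move=> xG yG; apply: (centsP cGG).
  have maxcomp (M : {group gT}) : maximal M G -> sum_free G (G :\: M) /\ (2 * #|G :\: M| = #|G|)%N.
    move=> maxM; have sMG := maxgroupp maxM; have sMG' := proper_sub sMG.
    have iM := p_maximal_index pG maxM.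
    have LM := Lagrange sMG'; rewrite iM in LM.
    have cD : #|G :\: M| = #|M| by rewrite cardsDS //; lia.
    split; last by rewrite cD; lia.
    apply/sum_freeP; split.
    + have [_ [x xG xM]] := properP sMG; apply/set0Pn; exists x; by rewrite inE xM.
    + exact: subsetDl.
    move=> x y; rewrite !inE => /andP [xM xG] /andP [yM yG].
    have sub : M :* x \subset G :\: M.
      apply/subsetP => z /rcosetP [m mM ->]; by rewrite inE groupMl // xM (groupM (subsetP sMG' _ mM) xG).
    have : M :* x == G :\: M by rewrite eqEcard sub card_rcoset cD; exact: leqnn.
    move/eqP => E.
    have : y \in M :* x by rewrite E inE yM.
    case/rcosetP => m mM ->.
    rewrite mulgA (comm _ _ xG (subsetP sMG' _ mM)) -mulgA -expg2 ex2 // mulg1.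
    by rewrite mM.
  split; last first.
    by apply/eqP; rewrite (trivg_Phi pG).
  move=> S; split.
  + case/andP => sfS /forallP maxS.
    have sfS' := sfS; case/sum_freeP: sfS' => /set0Pn [s sS] sSG sf.
    have sG : s \in G := subsetP sSG _ sS.
    have ntG : (1%G : {group gT}) \proper G.
      rewrite proper1G; apply/eqP => G1; move: sG; rewrite G1 inE => /eqP s1.
      by move: (sf _ _ sS sS); rewrite s1 mulg1 -s1 sS.
    have [M maxM _] := @maxgroup_exists _ (fun H : {group gT} => H \proper G) _ ntG.
    have [sfM cM] := maxcomp M maxM.
    have le1 := implyP (maxS (G :\: M)) sfM.
    have le2 := @sf_bound _ _ _ sfS.
    have eS : (2 * #|S| = #|G|)%N by apply/eqP; rewrite eqn_leq le2 -cM leq_mul2l le1 orbT.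
    set H := G :\: S.
    have cH : #|H| = #|S| by rewrite cardsDS // -eS mul2n -addnn addnK.
    have sT : mulg s @: S \subset H.
      apply/subsetP => y /imsetP [a aS ->]; rewrite inE sf //=.
      by rewrite groupM // (subsetP sSG).
    have EH : mulg s @: S = H.
      by apply/eqP; rewrite eqEcard sT cH (card_imset _ (mulgI s)) leqnn.
    have gH : group_set H.
      apply/group_setP; split.
        by rewrite -EH; apply/imsetP; exists s => //; rewrite /= -expg2 ex2.
      move=> x y; rewrite -{1 2}EH => /imsetP [a aS ->] /imsetP [b bS ->] /=.
      have aG := subsetP sSG _ aS; have bG := subsetP sSG _ bS.
      rewrite mulgA -(mulgA s a s) (comm a s aG sG) mulgA -expg2 ex2 // mul1g.
      by rewrite inE sf // groupM.
    exists (Group gH); split; last first.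
      by rewrite /= /H setDDr setDv set0U; apply/esym/setIidPr.
    apply: p_index_maximal; first exact: subsetDl.
    have := Lagrange (subsetDl G S : (Group gH : {set gT}) \subset G).
    move=> L; change (#|H| * #|G : Group gH| = #|G|)%N in L.
    suff -> : #|G : Group gH| = 2 by [].
    have S0 : 0 < #|S| by apply/card_gt0P; exists s.
    apply/eqP; rewrite -(eqn_pmul2l S0); apply/eqP.
    by rewrite -{1}cH L -eS mulnC.
  + case=> M [maxM ->]; have [sfM cM] := maxcomp M maxM.
    apply/andP; split => //; apply/forallP => T; apply/implyP => sfT.
    by have := @sf_bound _ _ _ sfT; rewrite -cM leq_mul2l.
- case=> [H Phi1].
  apply/(abelemP (isT : prime 2)).
  suff ex2 : forall x, x \in G -> x ^+ 2 = 1 by split=> //; apply: exp2_abelian.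
  move=> x xG.
  have : x ^+ 2 \in 'Phi(G).
    apply/bigcapP => M /orP [/eqP -> | maxM]; first by rewrite groupX.
    case/andP: ((H _).2 (ex_intro _ M (conj maxM erefl))) => sfM _.
    case/sum_freeP: sfM => _ _ sf.
    case: (boolP (x \in M)) => xM; first by rewrite groupX.
    have xD : x \in G :\: M by rewrite inE xM.
    by have := sf _ _ xD xD; rewrite expg2 inE (groupM xG xG) andbT negbK.
  by rewrite Phi1 => /set1gP.
Qed.
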